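(* Let $X,Y$ be Banach spaces, $T:X\to Y$ a bounded linear operator, $q\ge 2$ and $c>0$. Then $T$ is uniformly $q$-convex with constant $c$ if and only if $T$ has strong martingale cotype $q$ with constant $c$.
   Context: Dyadic setting: for $k=0,1,2,\dots$, $\mathcal F_k$ is the $\sigma$-algebra on $[0,1)$ generated by the dyadic intervals $[i/2^k,(i+1)/2^k)$, $i=0,\dots,2^k-1$ (so $\mathcal F_0$ is trivial), with Lebesgue measure. A sequence $d_0,d_1,\dots,d_n$ of $X$-valued functions on $[0,1)$ is a sequence of differences of a dyadic martingale if each $d_k$ is $\mathcal F_k$-measurable and $\mathbb E(d_k\mid\mathcal F_{k-1})=0$ for $k\ge1$ (so $d_0$ is constant). For $f:[0,1)\to X$, $\|f|L_q\|=(\int_0^1\|f(t)\|^q\,dt)^{1/q}$. $T$ is uniformly $q$-convex with constant $c$ if for all $x_+,x_-\in X$: $\left\|\frac{Tx_+-Tx_-}{2}\right\|\le c\left(\frac{\|x_+\|^q+\|x_-\|^q}{2}-\left\|\frac{x_++x_-}{2}\right\|^q\right)^{1/q}$. $T$ has strong martingale cotype $q$ with constant $c$ if for all $n\in\mathbb N$ and all sequences $d_0,\dots,d_n$ of $X$-valued differences of dyadic martingales with $d_0\equiv x$: $\left(\|x\|^q+c^{-q}\sum_{k=1}^n\|Td_k|L_q\|^q\right)^{1/q}\le\left\|\sum_{k=0}^n d_k\Big|L_q\right\|$. *)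

(* Defs.v *)
From HB Require Import structures.
From mathcomp Require Import all_boot all_order all_algebra.
From mathcomp Require Import all_classical all_reals all_analysis.
Set Implicit Arguments. Unset Strict Implicit. Unset Printing Implicit Defensive.
Import Order.TTheory GRing.Theory Num.Theory.
Import numFieldNormedType.Exports.
Local Open Scope classical_set_scope.
Local Open Scope ring_scope.

Definition unit_itv (R : realType) : set R := [set t : R | 0 <= t < 1].

Definition dyadic_itv (R : realType) (k i : nat) : set R :=
  [set t : R | i%:R / 2 ^+ k <= t < i.+1%:R / 2 ^+ k].

(* f : [0,1) -> V is F_k-measurable: F_k is the finite sigma-algebra whose
   atoms are the dyadic intervals of level k, so (the target being Hausdorff)
   measurability means f is constant on each atom. *)
Definition dyadic_measurable (R : realType) (V : Type) (k : nat) (f : R -> V) :=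
  forall i : nat, (i < 2 ^ k)%N ->
    forall s t, @dyadic_itv R k i s -> @dyadic_itv R k i t -> f s = f t.

(* E(f | F_{k-1}) = 0 for an F_k-measurable f (k >= 1): on each atom of
   F_{k-1}, [j/2^(k-1),(j+1)/2^(k-1)), the conditional expectation is the
   average of the values of f on its two halves (the level-k atoms 2j, 2j+1),
   so the condition is that these two values sum to zero. *)
Definition cond_exp_zero (R : realType) (V : zmodType) (k : nat) (f : R -> V) :=
  forall j : nat, (j < 2 ^ k.-1)%N ->
    forall s t, @dyadic_itv R k j.*2 s -> @dyadic_itv R k j.*2.+1 t ->
      f s + f t = 0.

Definition dyadic_mart_diff (R : realType) (V : normedModType R) (n : nat)
    (d : nat -> R -> V) :=
  (forall k, (k <= n)%N -> dyadic_measurable k (d k)) /\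
  (forall k, (1 <= k <= n)%N -> cond_exp_zero k (d k)).

Definition Lq_norm (R : realType) (V : normedModType R) (q : R) (f : R -> V) : R :=
  (fine (\int[@lebesgue_measure R]_(t in @unit_itv R) ((`|f t| `^ q)%:E))) `^ q^-1.

Definition uniformly_q_convex (R : realType) (X Y : normedModType R)
    (T : X -> Y) (q c : R) :=
  forall xp xm : X,
    `|(2^-1 : R) *: (T xp - T xm)| <=
      c * ((`|xp| `^ q + `|xm| `^ q) / 2 - `|(2^-1 : R) *: (xp + xm)| `^ q) `^ q^-1.

Definition strong_martingale_cotype (R : realType) (X Y : normedModType R)
    (T : X -> Y) (q c : R) :=
  forall (n : nat) (x : X) (d : nat -> R -> X),
    dyadic_mart_diff n d ->
    (forall t, @unit_itv R t -> d 0%N t = x) ->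
    (`|x| `^ q + c `^ (- q) * \sum_(1 <= k < n.+1) Lq_norm q (T \o d k) `^ q) `^ q^-1
      <= Lq_norm q (fun t => \sum_(0 <= k < n.+1) d k t).

(* Main.v *)
From Pilot Require Import Defs.
From HB Require Import structures.
From mathcomp Require Import all_boot all_order all_algebra.
From mathcomp Require Import all_classical all_reals all_analysis.
From mathcomp Require Import measurable_realfun.
From mathcomp Require Import ring lra.
Import Order.TTheory GRing.Theory Num.Theory.
Import numFieldNormedType.Exports.
Import Pilot.Defs.
Local Open Scope classical_set_scope.
Local Open Scope ring_scope.

Section Dy.
Variable R : realType.
Definition pt (n i : nat) : R := i%:R / 2 ^+ n.

Lemma two_n_gt0 n : 0 < (2:R) ^+ n.
Proof. by rewrite exprn_gt0. Qed.

Lemma dy_pt n i : @dyadic_itv R n i (pt n i).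
Proof.
rewrite /dyadic_itv /pt /=; apply/andP; split => //.
by rewrite ltr_pM2r ?invr_gt0 ?two_n_gt0 // ltr_nat.
Qed.

Lemma dy_unit n i : (i < 2 ^ n)%N -> @dyadic_itv R n i `<=` @unit_itv R.
Proof.
move=> hi t /andP[h1 h2]; rewrite /unit_itv /=; apply/andP; split.
  by apply: le_trans h1; rewrite divr_ge0 ?ler0n ?ltW ?two_n_gt0.
apply: (lt_le_trans h2); rewrite ler_pdivrMr ?two_n_gt0 // mul1r.
by rewrite -natrX ler_nat.
Qed.

Lemma dy_cover n t : @unit_itv R t -> exists2 i, (i < 2 ^ n)%N & @dyadic_itv R n i t.
Proof.
move=> /andP[t0 t1].
have x0 : 0 <= t * 2 ^+ n by rewrite mulr_ge0 // ltW ?two_n_gt0.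
exists (Num.truncn (t * 2 ^+ n)).
  rewrite truncn_lt_nat // natrX -[X in _ < X]mul1r ltr_pM2r ?two_n_gt0 //.
have /andP[h1 h2] := truncn_itv x0.
rewrite /dyadic_itv /=; apply/andP; split.
  by rewrite ler_pdivrMr ?two_n_gt0.
by rewrite ltr_pdivlMr ?two_n_gt0.
Qed.

Lemma dy_uniq n i j t : @dyadic_itv R n i t -> @dyadic_itv R n j t -> i = j.
Proof.
move=> /andP[a1 a2] /andP[b1 b2].
have lt1 : (i < j.+1)%N.
  have := le_lt_trans a1 b2.
  by rewrite ltr_pM2r ?invr_gt0 ?two_n_gt0 // ltr_nat.
have lt2 : (j < i.+1)%N.
  have := le_lt_trans b1 a2.
  by rewrite ltr_pM2r ?invr_gt0 ?two_n_gt0 // ltr_nat.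
by apply/eqP; rewrite eqn_leq -ltnS lt1 -ltnS lt2.
Qed.

Lemma dy_refine n i : @dyadic_itv R n.+1 i `<=` @dyadic_itv R n i./2.
Proof.
move=> t /andP[h1 h2]; rewrite /dyadic_itv /=.
have e : forall k : nat, (k%:R / 2 ^+ n : R) = k.*2%:R / 2 ^+ n.+1.
  by move=> k; rewrite -mul2n natrM exprS invfM mulrACA mulfV ?mul1r // pnatr_eq0.
have hi := odd_double_half i.
apply/andP; split.
  apply: le_trans h1; rewrite e ler_pM2r ?invr_gt0 ?two_n_gt0 // ler_nat.
  by rewrite -{2}hi leq_addl.
apply: (lt_le_trans h2); rewrite e ler_pM2r ?invr_gt0 ?two_n_gt0 // ler_nat.
by rewrite -{1}hi doubleS; case: (odd i).
Qed.

Lemma pt_double n j : pt n.+1 j.*2 = pt n j.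
Proof.
by rewrite /pt -mul2n natrM exprS invfM mulrACA mulfV ?mul1r // pnatr_eq0.
Qed.

Lemma dm_lift (V : Type) k m (f : R -> V) : (k <= m)%N ->
  dyadic_measurable k f -> dyadic_measurable m f.
Proof.
move=> km hf; elim: m km => [|m IH]; first by rewrite leqn0 => /eqP <-.
rewrite leq_eqVlt => /orP[/eqP <- //|]; rewrite ltnS => /IH {}IH.
move=> i hi s t hs ht; apply: (IH i./2).
- by move: hi; rewrite expnS -divn2 => hi; rewrite ltn_divLR // mulnC.
- exact: dy_refine.
- exact: dy_refine.
Qed.

Lemma dm_comp (V W : Type) n (f : R -> V) (h : V -> W) :
  dyadic_measurable n f -> dyadic_measurable n (h \o f).
Proof. by move=> hf i hi s t hs ht /=; rewrite (hf i hi s t). Qed.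


Lemma dy_itvE n i : @dyadic_itv R n i = [set` `[pt n i, pt n i.+1[%R].
Proof. by apply/seteqP; split => x; rewrite /= in_itv. Qed.

Lemma dy_meas n i : measurable (@dyadic_itv R n i).
Proof. by rewrite dy_itvE; exact: measurable_itv. Qed.

Lemma dy_leb n i : @lebesgue_measure R (@dyadic_itv R n i) = ((2 ^+ n)^-1)%:E.
Proof.
rewrite dy_itvE lebesgue_measure_itv /= lte_fin.
have -> : pt n i < pt n i.+1 by case/andP: (dy_pt n i).
by rewrite -EFinD /pt -mulrBl -natrB // subSnn mul1r.
Qed.

Lemma bigU_mem (F : nat -> set R) (s : seq nat) t :
  (\big[setU/set0]_(i <- s) F i) t <-> exists2 i, i \in s & F i t.
Proof.
elim: s => [|a s IH]; first by rewrite big_nil; split => // -[].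
rewrite big_cons; split.
  case=> [h|/IH [i hi h]]; first by exists a; rewrite ?mem_head.
  by exists i; rewrite // in_cons hi orbT.
case=> i; rewrite in_cons => /orP[/eqP -> h|hi h]; first by left.
by right; apply/IH; exists i.
Qed.

Lemma meas_step n (g : R -> R) (s : seq nat) : dyadic_measurable n g ->
  (forall i, i \in s -> (i < 2 ^ n)%N) ->
  measurable_fun (\big[setU/set0]_(i <- s) @dyadic_itv R n i) (EFin \o g).
Proof.
move=> hg; elim: s => [|a s IH] hs; first by rewrite big_nil; exact: measurable_fun_set0.
rewrite big_cons; apply/measurable_funU; [exact: dy_meas| |split].
- by apply: bigsetU_measurable => i _; exact: dy_meas.
- apply: (eq_measurable_fun (cst (g (pt n a))%:E)); last exact: measurable_cst.
  move=> t; rewrite inE => ht /=; congr EFin; apply: (hg a) => //.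
    by apply: hs; rewrite mem_head.
  exact: dy_pt.
- by apply: IH => i hi; apply: hs; rewrite in_cons hi orbT.
Qed.

Lemma int_step n (g : R -> R) : dyadic_measurable n g ->
  (\int[@lebesgue_measure R]_(t in @unit_itv R) (g t)%:E =
   ((\sum_(0 <= i < 2 ^ n) g (pt n i)) / 2 ^+ n)%:E)%E.
Proof.
move=> hg.
have U : @unit_itv R = \big[setU/set0]_(i <- iota 0 (2 ^ n)) @dyadic_itv R n i.
  apply/seteqP; split => t.
    move=> /(dy_cover n) [i hi ht]; apply/bigU_mem; exists i => //.
    by rewrite mem_iota.
  move=> /bigU_mem [i]; rewrite mem_iota add0n => /andP[_ hi]; exact: dy_unit.
rewrite U integral_bigsetU_EFin //; try (by move=> i; exact: dy_meas);
  try (by move=> i j _ _ [t [hi hj]]; exact: dy_uniq hi hj);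
  try (by apply: meas_step => // i; rewrite mem_iota add0n => /andP[_ ->]).
- rewrite mulr_suml -sumEFin /= /index_iota subn0; apply: eq_big_seq => i.
  rewrite mem_iota add0n => /andP[_ hi].
  rewrite (eq_integral (fun=> (g (pt n i))%:E)); last first.
    move=> t; rewrite inE => ht; congr EFin; apply: (hg i) => //; exact: dy_pt.
  rewrite integral_cst; last exact: dy_meas.
  transitivity ((g (pt n i))%:E * ((2 ^+ n)^-1)%:E)%E; last by rewrite -EFinM.
  by congr (_ * _)%E; exact: dy_leb.
exact: iota_uniq.
Qed.
Lemma half01 : Itv.spec (@Itv.num_sem R) (Itv.Real `[0%Z, 1%Z]) (2^-1 : R).
Proof.
rewrite /Itv.spec /= /Itv.num_sem /= in_itv /=. 
apply/andP; split; first by rewrite num_real.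
apply/andP; split; rewrite ?invr_ge0 ?ler0n //.
by rewrite invf_le1 // ler1n.
Qed.

Lemma midconv (q a b : R) : 1 <= q -> 0 <= a -> 0 <= b ->
  ((a + b) / 2) `^ q <= (a `^ q + b `^ q) / 2.
Proof.
move=> q1 a0 b0.
have := @convex_powR R q q1 (Itv.mk half01) a b.
rewrite !inE /= !in_itv /= !andbT => /(_ a0 b0).
rewrite !convRE /= [X in X `^ q <= _ -> _]convRE /=.
have -> : unstable.onem 2^-1 = 2^-1 :> R.
  rewrite /unstable.onem.
  by rewrite {1}(splitr 1) mul1r addrK.
by rewrite -!mulrDr !(mulrC 2^-1).
Qed.

Lemma Lq_step (V : normedModType R) (q : R) n (f : R -> V) :
  dyadic_measurable n f ->
  Lq_norm q f = ((\sum_(0 <= i < 2 ^ n) `|f (pt n i)| `^ q) / 2 ^+ n) `^ q^-1.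
Proof.
move=> hf; rewrite /Lq_norm (@int_step n (fun t => `|f t| `^ q)) //.
by move=> i hi s t hs ht; rewrite (hf i hi s t).
Qed.

Lemma powRK_inv (a q : R) : 0 <= a -> 0 < q -> (a `^ q^-1) `^ q = a.
Proof. by move=> a0 q0; rewrite -powRrM mulVf ?gt_eqF // powRr1. Qed.

Lemma avg_ge0 (q : R) n (F : nat -> R) :
  0 <= (\sum_(0 <= i < 2 ^ n) F i `^ q) / 2 ^+ n.
Proof. apply: divr_ge0; last exact: ltW (two_n_gt0 n). by apply: sumr_ge0 => i _; exact: powR_ge0. Qed.

Lemma nconv (X : normedModType R) (q : R) (g h : X) : 1 <= q ->
  `|g| `^ q <= (`|g + h| `^ q + `|g - h| `^ q) / 2.
Proof.
move=> q1; have := @midconv q _ _ q1 (normr_ge0 (g + h)) (normr_ge0 (g - h)). apply: le_trans.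
apply: ge0_ler_powR; rewrite ?nnegrE ?(le_trans _ q1) ?divr_ge0 ?addr_ge0 //.
have e : g + h + (g - h) = g *+ 2 by rewrite addrACA subrr addr0 mulr2n.
rewrite ler_pdivlMr // mulr_natr -normrMn -e.
exact: ler_normD.
Qed.


Lemma tp (X Y : normedModType R) (T : {linear X -> Y}) (q c : R) :
  1 <= q -> 0 < c -> uniformly_q_convex T q c -> forall g h : X,
  `|g| `^ q + c `^ (- q) * `|T h| `^ q <= (`|g + h| `^ q + `|g - h| `^ q) / 2.
Proof.
move=> q1 c0 hU g h.
have q0 : 0 < q by apply: lt_le_trans q1.
have := hU (g + h) (g - h).
have e1 : (2^-1 : R) *: (T (g + h) - T (g - h)) = T h.
  rewrite -linearB /= opprB addrC addrA subrK -mulr2n raddfMn /=.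
  by rewrite -[T h *+ 2]scaler_nat scalerA mulVf ?scale1r // pnatr_eq0.
have e2 : (2^-1 : R) *: (g + h + (g - h)) = g.
  rewrite addrACA subrr addr0 -mulr2n.
  by rewrite -[g *+ 2]scaler_nat scalerA mulVf ?scale1r // pnatr_eq0.
rewrite e1 e2 => H.
rewrite -lerBrDl.
set D := (_ / 2 - _).
have D0 : 0 <= D by rewrite /D subr_ge0; exact: nconv.
rewrite powRN ler_pdivrMl ?powR_gt0 //.
have := @ge0_ler_powR R q (ltW q0) `|T h| (c * D `^ q^-1).
rewrite !nnegrE normr_ge0 mulr_ge0 ?powR_ge0 ?(ltW c0) // => /(_ isT isT H).
by rewrite powRM ?powR_ge0 ?(ltW c0) // powRK_inv.
Qed.


Lemma pair_sum (N : nat) (a : nat -> R) :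
  \sum_(0 <= i < N.*2) a i = \sum_(0 <= j < N) (a j.*2 + a j.*2.+1).
Proof.
elim: N => [|N IH]; first by rewrite !big_geq.
by rewrite doubleS !big_nat_recr //= IH addrA.
Qed.

Lemma sum2 (V : zmodType) (a : nat -> V) : \sum_(0 <= i < 2) a i = a 0%N + a 1%N.
Proof. by rewrite big_nat_recr //= big_nat1. Qed.

Lemma powRK2 (a q : R) : 0 <= a -> 0 < q -> (a `^ q) `^ q^-1 = a.
Proof. by move=> a0 q0; rewrite -powRrM mulfV ?gt_eqF // powRr1. Qed.


Lemma dir2 (X Y : normedModType R) (T : {linear X -> Y}) (q c : R) :
  1 <= q -> 0 < c -> strong_martingale_cotype T q c -> uniformly_q_convex T q c.
Proof.
move=> q1 c0 hC xp xm.
have q0 : 0 < q by apply: lt_le_trans q1.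
set g := (2^-1 : R) *: (xp + xm).
set h := (2^-1 : R) *: (xp - xm).
pose d (k : nat) (t : R) : X :=
  if k == 0%N then g else if k == 1%N then (if t < 2^-1 then h else - h) else 0.
have p10 : pt 1 0 = 0 by rewrite /pt mul0r.
have p11 : pt 1 1 = 2^-1 by rewrite /pt expr1 mul1r.
have i0 : forall s, @dyadic_itv R 1 0 s -> s < 2^-1.
  by move=> s /andP[_]; rewrite expr1 mul1r.
have i1 : forall s, @dyadic_itv R 1 1 s -> ~~ (s < 2^-1).
  by move=> s /andP[+ _]; rewrite expr1 mul1r -leNgt.
have hm1 : dyadic_measurable 1 (d 1%N).
  move=> [|[|//]] _ s t hs ht; rewrite /d /=.
    by rewrite (i0 _ hs) (i0 _ ht).
  by rewrite (negbTE (i1 _ hs)) (negbTE (i1 _ ht)).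
have hd : dyadic_mart_diff 1 d.
  split.
    by move=> [|[|//]] _ //= i hi s t hs ht; exact: hm1 hs ht.
  move=> [//|[|//]] _ [|//] _ s t hs ht; rewrite /d /=.
  by rewrite (i0 _ hs) (negbTE (i1 _ ht)) subrr.
have := hC 1%N g d hd (fun _ _ => erefl).
have hTm : dyadic_measurable 1 (T \o d 1%N).
  by move=> i hi s t hs ht /=; rewrite (hm1 i hi s t).
have hSm : dyadic_measurable 1 (fun t => \sum_(0 <= k < 2) d k t).
  move=> i hi s t hs ht; rewrite !sum2 /=; congr (_ + _); exact: hm1 hs ht.
rewrite big_nat1 (Lq_step _ q _ _ hTm) (Lq_step _ q _ _ hSm) !sum2 /= p10 p11.
rewrite /d /= invr_gt0 ltr0n ltxx /= linearN normrN.
rewrite powRK_inv //.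
have e1 : g + h = xp.
  rewrite /g /h -scalerDr addrACA subrr addr0 -mulr2n.
  by rewrite -[xp *+ 2]scaler_nat scalerA mulVf ?scale1r // pnatr_eq0.
have e2 : g - h = xm.
  rewrite /g /h -scalerBr opprB addrC addrA subrK -mulr2n.
  by rewrite -[xm *+ 2]scaler_nat scalerA mulVf ?scale1r // pnatr_eq0.
rewrite e1 e2 expr1 => H.
have eT : (2^-1 : R) *: (T xp - T xm) = T h.
  by rewrite /h linearZ_LR linearB /= linearB scalerBr.
rewrite eT; move: H.
set Q := ((`|xp| `^ q + `|xm| `^ q) / 2).
have hQ : 0 <= Q by rewrite /Q divr_ge0 ?addr_ge0 ?powR_ge0.
set P := (`|g| `^ q + _).
have hP : 0 <= P.
  by rewrite /P addr_ge0 ?powR_ge0 // mulr_ge0 ?powR_ge0 // divr_ge0 ?addr_ge0 ?powR_ge0.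
move=> H.
have PQ : P <= Q.
  rewrite -(powRK_inv _ _ hP q0) -(powRK_inv _ _ hQ q0).
  by apply: (@ge0_ler_powR R q (ltW q0)); rewrite ?nnegrE ?powR_ge0.
move: PQ; rewrite /P.
have -> : (`|T h| `^ q + `|T h| `^ q) / 2 = `|T h| `^ q.
  by field.
rewrite -lerBrDl /Q; set D := (_ / 2 - _) => HD.
have D0 : 0 <= D by apply: le_trans HD; rewrite mulr_ge0 ?powR_ge0.
move: HD; rewrite powRN ler_pdivrMl ?powR_gt0 // => HD.
rewrite -(powRK2 _ _ (normr_ge0 (T h)) q0).
rewrite -[c in c * _](powRK2 _ _ (ltW c0) q0) -powRM ?powR_ge0 //.
apply: (@ge0_ler_powR R q^-1); rewrite ?nnegrE ?invr_ge0 ?powR_ge0 ?(ltW q0) //.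
by rewrite mulr_ge0 ?powR_ge0.
Qed.


Lemma comb (N : nat) (a b e : nat -> R) (M k : R) : 0 < M ->
  (forall j, (j < N)%N -> 2 * a j + k * b j <= e j) ->
  (\sum_(0 <= j < N) a j) / M + k * ((\sum_(0 <= j < N) b j) / (2 * M))
    <= (\sum_(0 <= j < N) e j) / (2 * M).
Proof.
move=> M0 H.
have -> : (\sum_(0 <= j < N) a j) / M + k * ((\sum_(0 <= j < N) b j) / (2 * M)) =
    (\sum_(0 <= j < N) (2 * a j + k * b j)) / (2 * M).
  rewrite big_split /= -!mulr_sumr; field.
  by rewrite gt_eqF.
apply: ler_wpM2r; first by rewrite invr_ge0 mulr_ge0 // ltW.
by apply: ler_sum_nat => j /andP[_ hj]; exact: H.
Qed.

Lemma dir1 (X Y : normedModType R) (T : {linear X -> Y}) (q c : R) :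
  1 <= q -> 0 < c -> uniformly_q_convex T q c -> strong_martingale_cotype T q c.
Proof.
move=> q1 c0 hU n x d [hm hce] hx.
have q0 : 0 < q by apply: lt_le_trans q1.
pose S m t := \sum_(0 <= k < m.+1) d k t.
have Sm : forall m, (m <= n)%N -> dyadic_measurable m (S m).
  move=> m mn i hi s t hs ht; rewrite /S; apply: eq_big_nat => k /andP[_ km].
  have kmm : (k <= m)%N by rewrite -ltnS.
  have kn : (k <= n)%N by apply: leq_trans mn.
  exact: (dm_lift _ k m _ kmm (hm k kn)) i hi s t hs ht.
pose A k := (\sum_(0 <= i < 2 ^ k) `|T (d k (pt k i))| `^ q) / 2 ^+ k.
pose B m := (\sum_(0 <= i < 2 ^ m) `|S m (pt m i)| `^ q) / 2 ^+ m.
have claim : forall m, (m <= n)%N ->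
    `|x| `^ q + c `^ (- q) * \sum_(1 <= k < m.+1) A k <= B m.
  elim => [_|m IH hmn].
    rewrite big_geq // mulr0 addr0 /B /S expn0 expr0 divr1 !big_nat1 hx //.
    by apply: (dy_unit 0 0) => //; exact: dy_pt.
  rewrite big_nat_recr //= mulrDr addrA.
  apply: le_trans (lerD (IH (ltnW hmn)) (lexx _)) _.
  have Ssplit t : S m.+1 t = S m t + d m.+1 t by rewrite /S big_nat_recr.
  have term : forall j, (j < 2 ^ m)%N ->
      2 * `|S m (pt m j)| `^ q + c `^ (- q) *
        (`|T (d m.+1 (pt m.+1 j.*2))| `^ q + `|T (d m.+1 (pt m.+1 j.*2.+1))| `^ q)
      <= `|S m.+1 (pt m.+1 j.*2)| `^ q + `|S m.+1 (pt m.+1 j.*2.+1)| `^ q.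
    move=> j hj.
    have in1 : @dyadic_itv R m j (pt m.+1 j.*2.+1).
      have := dy_refine m j.*2.+1 _ (dy_pt _ _).
      by rewrite /= uphalf_double.
    have Sodd : S m (pt m.+1 j.*2.+1) = S m (pt m j).
      exact: (Sm m (ltnW hmn) j hj _ _ in1 (dy_pt m j)).
    have hce' := hce m.+1 hmn j hj _ _ (dy_pt _ _) (dy_pt _ _).
    have dodd : d m.+1 (pt m.+1 j.*2.+1) = - d m.+1 (pt m.+1 j.*2).
      by apply/eqP; rewrite -addr_eq0 addrC hce'.
    rewrite !Ssplit Sodd dodd pt_double linearN normrN.
    have := tp _ _ T _ _ q1 c0 hU (S m (pt m j)) (d m.+1 (pt m j)).
    move=> H; lra.
  rewrite /A /B expnS mul2n !pair_sum exprS.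
  apply: comb; last exact: term.
  exact: two_n_gt0.
have hSn := Sm n (leqnn n).
rewrite (Lq_step _ q _ _ hSn).
have LA : forall k, (1 <= k < n.+1)%N -> Lq_norm q (T \o d k) `^ q = A k.
  move=> k /andP[_ kn].
  have hk : dyadic_measurable k (T \o d k).
    by move=> i hi s t hs ht /=; rewrite (hm k kn i hi s t hs ht).
  by rewrite (Lq_step _ q _ _ hk) powRK_inv // avg_ge0.
rewrite (eq_big_nat _ _ LA).
apply: (@ge0_ler_powR R q^-1); rewrite ?nnegrE ?invr_ge0 ?(ltW q0) //.
- rewrite addr_ge0 ?powR_ge0 // mulr_ge0 ?powR_ge0 //.
  by apply: sumr_ge0 => k _; exact: avg_ge0.
- exact: avg_ge0.
- exact: claim.
Qed.

End Dy.

Theorem theorem1 (R : realType) (X Y : completeNormedModType R)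
  (T : {linear X -> Y}) (hT : continuous T) (q c : R)
  (hq : 2 <= q) (hc : 0 < c) :
  uniformly_q_convex T q c <-> strong_martingale_cotype T q c.
Proof.
have q1 : 1 <= q by apply: le_trans hq; rewrite ler1n.
split; [exact: dir1 | exact: dir2].
Qed.
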